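(* Let $a_0,a_1,\ldots\in\mathbb{R}$ satisfy $\sum_{j=0}^\infty|a_j|<\infty$. Then the series $f(x)=\sum_{j=0}^\infty 2^{j-1}a_jQ_j(x)$ converges absolutely for every $x\in[-1,1]$, and for every integer $D\ge1$, \[ \Big(\frac12\sum_{k=D}^\infty\frac{a_k^2}{k}\Big)^{1/2}\le \inf_{p\in\mathcal{P}_{D-1}}\ \sup_{x\in[-1,1]}|p(x)-f(x)|\le\sum_{j=D}^\infty|a_j|. \]
   Context: $\mathcal{P}_d$ denotes the set of real polynomials in one variable of degree at most $d$. The monic Chebyshev polynomials $Q_d\in\mathcal{P}_d$ are defined by $Q_0(x)=1$ and, for $d\ge1$, by the requirement $Q_d(\cos\theta)=2^{1-d}\cos(d\theta)$ for all $\theta\in[0,2\pi]$. *)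

(* Defs.v *)
From HB Require Import structures.
From mathcomp Require Import all_boot all_order all_algebra.
From mathcomp Require Import all_classical all_reals all_analysis.
From mathcomp Require Import ring lra zify.
Set Implicit Arguments. Unset Strict Implicit. Unset Printing Implicit Defensive.
Import Order.TTheory GRing.Theory Num.Theory.
Local Open Scope ring_scope.

Section Cheb.
Variable R : realType.

Fixpoint chebT_pair (n : nat) : {poly R} * {poly R} :=
  match n with
  | 0 => (1, 'X)
  | n.+1 => let pq := chebT_pair n in (pq.2, 2%:P * 'X * pq.2 - pq.1)
  end.

Definition chebT (n : nat) : {poly R} := (chebT_pair n).1.

(* Monic Chebyshev polynomials: Q_0 = 1, Q_d = 2^(1-d) T_d for d >= 1. *)
Definition chebQ (d : nat) : {poly R} :=
  if d is 0 then 1 else (2 / 2 ^+ d) *: chebT d.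

Lemma chebT_pair_snd n : (chebT_pair n).2 = chebT n.+1.
Proof. by []. Qed.

Lemma chebT_SS n : chebT n.+2 = 2%:P * 'X * chebT n.+1 - chebT n.
Proof. by []. Qed.

Lemma chebT_cos n (t : R) : (chebT n).[cos t] = cos (n%:R * t).
Proof.
suff H : (chebT n).[cos t] = cos (n%:R * t) /\
         (chebT n.+1).[cos t] = cos (n.+1%:R * t) by case: H.
elim: n => [|n [IH1 IH2]].
  by rewrite /chebT /= hornerC hornerX mul0r cos0 mul1r.
split=> //.
rewrite chebT_SS hornerD hornerN !hornerM hornerX hornerC IH1 IH2.
have -> : n.+2%:R * t = n.+1%:R * t + t by rewrite -natr1 mulrDl mul1r.
have -> : n%:R * t = n.+1%:R * t - t by rewrite -natr1 mulrDl mul1r addrK.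
rewrite !cosD cosN sinN; ring.
Qed.

Lemma chebQ_cos d (t : R) : (0 < d)%N ->
  (chebQ d).[cos t] = 2 / 2 ^+ d * cos (d%:R * t).
Proof. by case: d => // d _; rewrite /chebQ hornerZ chebT_cos. Qed.

Lemma size_chebT n : (size (chebT n) <= n.+1)%N.
Proof.
suff H : (size (chebT n) <= n.+1)%N /\ (size (chebT n.+1) <= n.+2)%N by case: H.
elim: n => [|n [IH1 IH2]].
  by rewrite /chebT /= size_poly1 size_polyX.
split=> //; rewrite chebT_SS.
apply: (leq_trans (size_polyD _ _)); rewrite geq_max; apply/andP; split.
  have h1 := size_polyMleq (2%:P * 'X) (chebT n.+1).
  have h2 := size_polyMleq (2%:P : {poly R}) 'X.
  have h3 : (size (2%:P : {poly R}) <= 1)%N := size_polyC_leq1 _.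
  rewrite size_polyX in h2; lia.
rewrite size_polyN; exact: (leq_trans IH1 (leq_trans (leqnSn _) (leqnSn _))).

Qed.

Lemma size_chebQ d : (size (chebQ d) <= d.+1)%N.
Proof.
case: d => [|d]; first by rewrite /chebQ size_poly1.
exact: leq_trans (size_scale_leq _ _) (size_chebT _).
Qed.

End Cheb.

(* Main.v *)
Require Import Defs.
From HB Require Import structures.
From mathcomp Require Import all_boot all_order all_algebra.
From mathcomp Require Import all_classical all_reals all_analysis.
From mathcomp Require Import ring lra zify.
Import Order.TTheory GRing.Theory Num.Theory numFieldNormedType.Exports.
Local Open Scope classical_set_scope.
Local Open Scope ring_scope.

Lemma sin_natpi (R : realType) (l : nat) : sin (l%:R * pi) = 0 :> R.
Proof.
elim: l => [|l IH]; first by rewrite mul0r sin0.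
by rewrite -natr1 mulrDl mul1r sinDpi IH oppr0.
Qed.

Definition th (R : realType) (N m : nat) : R := (2 * m + 1)%:R * pi / (2 * N)%:R.

Lemma Csum_zero (R : realType) (N l : nat) : (0 < l < 2 * N)%N ->
  \sum_(m < N) cos (l%:R * th R N m) = 0.
Proof.
move=> /andP[l0 lN].
have N0 : (0 < N)%N by lia.
set phi : R := l%:R * pi / (2 * N)%:R.
have NE : (2 * N)%:R != 0 :> R by rewrite pnatr_eq0; lia.
have eq m : l%:R * th R N m = (2 * m + 1)%:R * phi.
  by rewrite /th /phi; ring.
have tel : \sum_(0 <= m < N) (2 * sin phi * cos ((2 * m + 1)%:R * phi))
    = sin ((2 * N)%:R * phi) - sin ((2 * 0)%:R * phi).
  apply: (telescope_sumr_eq (fun m => sin ((2 * m)%:R * phi))) => // k _.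
  have -> : ((2 * k.+1)%:R : R) = (2 * k + 1)%:R + 1.
    by rewrite (_ : (2 * k.+1 = (2 * k + 1) + 1)%N) ?natrD //; lia.
  have -> : ((2 * k)%:R : R) = (2 * k + 1)%:R - 1.
    by rewrite natrD addrK.
  rewrite !mulrDl mulNr !mul1r !sinD sinN cosN; ring.
have e2 : (2 * N)%:R * phi = l%:R * pi by rewrite /phi mulrC divfK.
rewrite e2 sin_natpi muln0 mul0r sin0 subr0 big_mkord -mulr_sumr in tel.
have sp : 0 < sin phi.
  apply: sin_gt0_pi; apply/andP; split.
    by rewrite /phi divr_gt0 // ?mulr_gt0 ?pi_gt0 // ltr0n; lia.
  have hl : (l%:R : R) < (2 * N)%:R by rewrite ltr_nat.
  have hp : 0 < (pi : R) := pi_gt0 R.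
  have hN : 0 < ((2 * N)%:R : R) by rewrite ltr0n; lia.
  nra.
under eq_bigr do rewrite eq.
move/eqP: tel; rewrite mulf_eq0 => /orP[|/eqP //].
rewrite mulf_eq0 => /orP[|]; first by rewrite pnatr_eq0.
by move/eqP => h; move: sp; rewrite h ltxx.
Qed.

Lemma cos_prod (R : realType) (j k : nat) (t : R) : (k <= j)%N ->
  cos (j%:R * t) * cos (k%:R * t) = (cos ((j + k)%:R * t) + cos ((j - k)%:R * t)) / 2.
Proof.
move=> hkj; rewrite natrD natrB // [(_ + _) * t]mulrDl [(_ - _) * t]mulrBl cosD cosB; by field.
Qed.

Definition G (R : realType) (N j k : nat) : R :=
  \sum_(m < N) cos (j%:R * th R N m) * cos (k%:R * th R N m).

Lemma G_off (R : realType) (N j k : nat) : (j < N)%N -> (k < N)%N -> j != k ->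
  G R N j k = 0.
Proof.
wlog hkj: j k / (k < j)%N.
  move=> H hj hk hne; case: (ltngtP k j) => h; first by apply: H.
  - rewrite /G (eq_bigr _ (fun i _ => mulrC _ _)); apply: H => //.
    by rewrite eq_sym.
  - by move: hne; rewrite h eqxx.
move=> hj hk _; rewrite /G.
under eq_bigr do rewrite cos_prod ?(ltnW hkj) //.
rewrite -mulr_suml big_split /= !Csum_zero ?addr0 ?mul0r //; lia.
Qed.

Lemma G_diag (R : realType) (N j : nat) : (j < N)%N -> N%:R / 2 <= G R N j j.
Proof.
move=> hj; rewrite /G.
under eq_bigr do rewrite cos_prod // subnn mul0r cos0.
rewrite -mulr_suml big_split /= sumr_const card_ord.
have hC : 0 <= \sum_(i < N) cos ((j + j)%:R * th R N i).
  case: j hj => [|j] hj.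
    by rewrite sumr_ge0 // => i _; rewrite mul0r cos0.
  by rewrite Csum_zero //; lia.
rewrite -[1 *+ N]/(N%:R); lra.
Qed.

Lemma parseval (R : realType) (n : nat) (c : nat -> R) (B : R) :
  (forall t : R, `|\sum_(j < n) c j * cos (j%:R * t)| <= B) ->
  \sum_(j < n) c j ^+ 2 <= 2 * B ^+ 2.
Proof.
case: n => [|N] hB.
  by rewrite big_ord0 mulr_ge0 ?sqr_ge0.
pose h m := \sum_(j < N.+1) c j * cos (j%:R * th R N.+1 m).
have h1 : \sum_(m < N.+1) h m ^+ 2 <= N.+1%:R * B ^+ 2.
  have hm : forall m : 'I_N.+1, h m ^+ 2 <= B ^+ 2.
    move=> m; have := hB (th R N.+1 m); rewrite -/(h m) ler_norml.
    move=> /andP[ha hb]; nra.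
  apply: le_trans (ler_sum _ (fun m _ => hm m)) _.
  by rewrite sumr_const card_ord mulr_natl.
have h2 : \sum_(m < N.+1) h m ^+ 2 =
    \sum_(j < N.+1) \sum_(k < N.+1) c j * c k * G R N.+1 j k.
  transitivity (\sum_(m < N.+1) \sum_(j < N.+1) \sum_(k < N.+1)
      c j * c k * (cos (j%:R * th R N.+1 m) * cos (k%:R * th R N.+1 m))).
    apply: eq_bigr => m _; rewrite expr2 mulr_suml; apply: eq_bigr => j _.
    rewrite mulr_sumr; apply: eq_bigr => k _; ring.
  rewrite exchange_big; apply: eq_bigr => j _; rewrite exchange_big.
  by apply: eq_bigr => k _; rewrite /G mulr_sumr.
have h3 : forall j : 'I_N.+1,
    \sum_(k < N.+1) c j * c k * G R N.+1 j k = c j ^+ 2 * G R N.+1 j j.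
  move=> j; rewrite (bigD1 j) //= big1 ?addr0 ?expr2 // => k hk.
  by rewrite G_off ?mulr0 // eq_sym.
rewrite h2 (eq_bigr _ (fun j _ => h3 j)) in h1.
have h4 : N.+1%:R / 2 * \sum_(j < N.+1) c j ^+ 2 <=
    \sum_(j < N.+1) c j ^+ 2 * G R N.+1 j j.
  rewrite mulr_sumr; apply: ler_sum => j _.
  by rewrite mulrC ler_wpM2l ?sqr_ge0 // G_diag.
have hK : 0 < (N.+1%:R : R) by rewrite ltr0n.
move: (le_trans h4 h1); set S := \sum_(j < N.+1) c j ^+ 2.
set K := N.+1%:R; move=> hh; nra.
Qed.

Definition spanc (R : realType) (n : nat) (h : R -> R) :=
  exists d : nat -> R, forall t, h t = \sum_(j < n) d j * cos (j%:R * t).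
Arguments spanc {R}.

Lemma spanc_widen (R : realType) (n m : nat) (h : R -> R) :
  (n <= m)%N -> spanc n h -> spanc m h.
Proof.
move=> nm [d hd]; exists (fun j => if (j < n)%N then d j else 0) => t.
rewrite hd (big_ord_widen m (fun j => d j * cos (j%:R * t)) nm) big_mkcond /=.
by apply: eq_bigr => j _; case: ifP => //; rewrite mul0r.
Qed.

Lemma spanc0 (R : realType) n : spanc n (fun _ : R => 0).
Proof. by exists (fun _ => 0) => t; rewrite big1 // => j _; rewrite mul0r. Qed.

Lemma spancD (R : realType) n (h1 h2 : R -> R) :
  spanc n h1 -> spanc n h2 -> spanc n (fun t => h1 t + h2 t).
Proof.
move=> [d1 e1] [d2 e2]; exists (fun j => d1 j + d2 j) => t.
by rewrite e1 e2 -big_split; apply: eq_bigr => j _; rewrite mulrDl.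
Qed.

Lemma spancZ (R : realType) n (c : R) (h : R -> R) :
  spanc n h -> spanc n (fun t => c * h t).
Proof.
move=> [d e]; exists (fun j => c * d j) => t.
by rewrite e mulr_sumr; apply: eq_bigr => j _; rewrite mulrA.
Qed.

Lemma spanc_cos (R : realType) n k : (k < n)%N ->
  spanc n (fun t : R => cos (k%:R * t)).
Proof.
move=> kn; exists (fun j => if j == k then 1 else 0) => t.
rewrite (bigD1 (Ordinal kn)) //= eqxx mul1r big1 ?addr0 // => j hj.
have -> : (nat_of_ord j == k) = false.
  by apply/negbTE; apply: contra hj => /eqP hjk; apply/eqP/val_inj.
by rewrite mul0r.
Qed.

Lemma spanc_sum (R : realType) n m (F : nat -> R -> R) :
  (forall i, (i < m)%N -> spanc n (F i)) ->
  spanc n (fun t => \sum_(i < m) F i t).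
Proof.
elim: m => [|m IH] hF.
  by have [d e] := spanc0 R n; exists d => t; rewrite big_ord0 -e.
have [d e] : spanc n (fun t => \sum_(i < m) F i t + F m t).
  by apply: spancD; [apply: IH => i hi; apply: hF; lia | apply: hF].
by exists d => t; rewrite big_ord_recr -e.
Qed.

Lemma spanc_ext (R : realType) n (h1 h2 : R -> R) :
  (forall t, h1 t = h2 t) -> spanc n h1 -> spanc n h2.
Proof. by move=> e [d hd]; exists d => t; rewrite -e. Qed.

Lemma spanc_mulcos (R : realType) n (h : R -> R) :
  spanc n h -> spanc n.+1 (fun t => cos t * h t).
Proof.
move=> [d e].
apply: (@spanc_ext _ _ (fun t => \sum_(j < n) d j * (cos t * cos (j%:R * t)))).
  by move=> t; rewrite e mulr_sumr; apply: eq_bigr => j _; ring.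
apply: (@spanc_sum R n.+1 n (fun j t => d j * (cos t * cos (j%:R * t)))) => j hj.
apply: spancZ.
case: j hj => [|j] hj.
  apply: (@spanc_ext _ _ (fun t => cos (1%:R * t))).
    by move=> t; rewrite mul0r cos0 mulr1 mul1r.
  by apply: spanc_cos; lia.
apply: (@spanc_ext _ _ (fun t => 2^-1 * cos (j.+2%:R * t) + 2^-1 * cos (j%:R * t))).
  move=> t.
  have -> : (j.+2%:R : R) = j%:R + 2 by rewrite -!natr1; ring.
  have -> : (j.+1%:R : R) = j%:R + 1 by rewrite -!natr1.
  rewrite !mulrDl cosD cosD mul1r.
  rewrite cosD sinD.
  have E := cos2Dsin2 t.
  move: (cos t) (sin t) (cos (j%:R * t)) (sin (j%:R * t)) E => c s cj sj E.
  have -> : 2^-1 * cj = 2^-1 * cj * (c ^+ 2 + s ^+ 2) by rewrite E mulr1.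
  by field.
apply: (@spancD R n.+1 (fun t => 2^-1 * cos (j.+2%:R * t)) (fun t => 2^-1 * cos (j%:R * t))).
  by apply: (@spancZ R n.+1 2^-1 (fun t => cos (j.+2%:R * t))); apply: spanc_cos; lia.
by apply: (@spancZ R n.+1 2^-1 (fun t => cos (j%:R * t))); apply: spanc_cos; lia.
Qed.

Lemma spanc_pow (R : realType) i : spanc i.+1 (fun t : R => cos t ^+ i).
Proof.
elim: i => [|i IH].
  apply: (@spanc_ext _ _ (fun t => cos (0%:R * t))).
    by move=> t; rewrite mul0r cos0 expr0.
  exact: spanc_cos.
apply: (@spanc_ext _ _ (fun t => cos t * cos t ^+ i)).
  by move=> t; rewrite exprS.
exact: spanc_mulcos.
Qed.

Lemma spanc_poly (R : realType) (q : {poly R}) n : (size q <= n)%N ->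
  spanc n (fun t => q.[cos t]).
Proof.
move=> hq.
apply: (@spanc_ext _ _ (fun t => \sum_(i < size q) q`_i * cos t ^+ i)).
  by move=> t; rewrite horner_coef.
apply: (@spanc_sum R n (size q) (fun i t => q`_i * cos t ^+ i)) => i hi.
apply: spancZ.
by apply: (@spanc_widen R i.+1); [lia | apply: spanc_pow].
Qed.

Lemma tail_cvg {R : realType} (u : nat -> R) N : cvgn (series u) ->
  cvgn (fun n => \sum_(N <= k < n) u k).
Proof. by move=> h; rewrite is_cvg_series_restrict. Qed.

Lemma tailE {R : realType} (u : nat -> R) N : cvgn (series u) ->
  limn (fun n => \sum_(N <= k < n) u k) = limn (series u) - series u N.
Proof.
move=> hu; apply: cvg_lim => //.
have h1 : (fun n => series u n - series u N) @ \oo --> limn (series u) - series u N.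
  by apply: cvgB => //; exact: cvg_cst.
apply: (cvg_trans _ h1); apply: near_eq_cvg.
exists N => // n /= hn.
by rewrite /series /= (big_cat_nat (leq0n N) hn) /= addrAC subrr add0r.
Qed.

Lemma tail_norm_le {R : realType} (u b : nat -> R) N :
  cvgn (series u) -> cvgn (series b) -> (forall j, `|u j| <= b j) ->
  `|limn (series u) - series u N| <= limn (fun n => \sum_(N <= k < n) b k).
Proof.
move=> hu hb hub.
rewrite -tailE // -lim_norm; last exact: tail_cvg.
apply: ler_lim.
- by apply: is_cvg_norm; exact: tail_cvg.
- exact: tail_cvg.
exists 0%N => // n _ /=.
by apply: le_trans (ler_norm_sum _ _ _) _; apply: ler_sum => j _.
Qed.

Lemma tail_small {R : realType} (b : nat -> R) : cvgn (series b) ->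
  forall e, 0 < e -> exists N0, forall N, (N0 <= N)%N ->
    limn (fun n => \sum_(N <= k < n) b k) <= e.
Proof.
move=> hb e e0.
have := hb; move/cvgrPdist_le => /(_ e e0) [N0 _ hN0].
exists N0 => N hN; rewrite tailE //.
exact: le_trans (ler_norm _) (hN0 N hN).
Qed.

Lemma chebT_bound {R : realType} j (x : R) : -1 <= x <= 1 -> `|(chebT R j).[x]| <= 1.
Proof. by move=> hx; have [_ <-] := acos_def hx; rewrite chebT_cos cos_max. Qed.

Lemma uE {R : realType} (a : nat -> R) j (x : R) :
  2 ^+ j / 2 * a j * (chebQ R j).[x] =
  (if j == 0%N then 2^-1 else 1) * a j * (chebT R j).[x].
Proof.
case: j => [|j] /=.
  by rewrite /chebT /= hornerC expr0 mul1r.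
rewrite /chebQ hornerZ.
have : (2 : R) ^+ j.+1 != 0 by rewrite expf_neq0.
move: (2 ^+ j.+1) => z hz.
by field.
Qed.

Lemma u_abs {R : realType} (a : nat -> R) j (x : R) : -1 <= x <= 1 ->
  `|2 ^+ j / 2 * a j * (chebQ R j).[x]| <= `|a j|.
Proof.
move=> hx; rewrite uE !normrM.
have h1 : `|(if j == 0%N then 2^-1 else 1) : R| <= 1.
  by case: (j == 0%N); rewrite ?normr1 // ger0_norm ?invr_ge0 // invf_le1 // ler1n.
have h2 := chebT_bound j x hx.
have h3 := normr_ge0 (a j).
have h4 := normr_ge0 ((if j == 0%N then 2^-1 else 1) : R).
have h5 := normr_ge0 (chebT R j).[x].
have hA : `|a j| * `|(chebT R j).[x]| <= `|a j| by nra.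
rewrite -mulrA; nra.
Qed.

Lemma u_cos {R : realType} (a : nat -> R) j (t : R) : (0 < j)%N ->
  2 ^+ j / 2 * a j * (chebQ R j).[cos t] = a j * cos (j%:R * t).
Proof.
by move=> hj; rewrite uE chebT_cos; case: j hj => // j _ /=; rewrite mul1r.
Qed.

Theorem proposition2p2 (R : realType) (a : nat -> R)
  (ha : cvgn (series (fun j => `|a j|))) :
  (forall x : R, -1 <= x <= 1 ->
     cvgn (series (fun j => `|2 ^+ j / 2 * a j * (chebQ R j).[x]|))) /\
  (forall D : nat, (1 <= D)%N ->
     let f := fun x : R =>
       limn (series (fun j => 2 ^+ j / 2 * a j * (chebQ R j).[x])) in
     let E : \bar R :=
       ereal_inf [set ereal_sup [set (`|p.[x] - f x|)%:E
                                | x in [set x : R | -1 <= x <= 1]]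
                 | p in [set p : {poly R} | (size p <= D)%N]] in
     ((Num.sqrt (2^-1 * limn (fun n => \sum_(D <= k < n) (a k ^+ 2 / k%:R))))%:E
        <= E)%E /\
     (E <= (limn (fun n => \sum_(D <= j < n) `|a j|))%:E)%E).
Proof.
have habs : forall x : R, -1 <= x <= 1 ->
    cvgn (series (fun j => `|2 ^+ j / 2 * a j * (chebQ R j).[x]|)).
  move=> x hx; apply: (series_le_cvg _ _ _ ha) => n.
  - exact: normr_ge0.
  - exact: normr_ge0.
  - exact: u_abs.
split; first exact: habs.
move=> D hD f E.
have hcv : forall x : R, -1 <= x <= 1 ->
    cvgn (series (fun j => 2 ^+ j / 2 * a j * (chebQ R j).[x])).
  by move=> x hx; apply: normed_cvg; exact: habs.
pose tau N := limn (fun n => \sum_(N <= k < n) `|a k|).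
have hA : forall (x : R) N, -1 <= x <= 1 ->
    `|f x - \sum_(j < N) 2 ^+ j / 2 * a j * (chebQ R j).[x]| <= tau N.
  move=> x N hx.
  have -> : \sum_(j < N) 2 ^+ j / 2 * a j * (chebQ R j).[x] =
      series (fun j => 2 ^+ j / 2 * a j * (chebQ R j).[x]) N.
    by rewrite /series /= big_mkord.
  exact: (@tail_norm_le R _ _ N (hcv x hx) ha (fun j => u_abs a j x hx)).
pose p0 := \sum_(j < D) (2 ^+ j / 2 * a j) *: chebQ R j.
have hp0 : (size p0 <= D)%N.
  apply: (big_ind (fun q : {poly R} => (size q <= D)%N)).
  - by rewrite size_poly0.
  - move=> q1 q2 h1 h2; apply: leq_trans (size_polyD _ _) _.
    by rewrite geq_max h1 h2.
  - move=> j _; apply: leq_trans (size_scale_leq _ _) _.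
    exact: leq_trans (size_chebQ R j) (ltn_ord j).
have hp0x : forall x, p0.[x] = \sum_(j < D) 2 ^+ j / 2 * a j * (chebQ R j).[x].
  by move=> x; rewrite horner_sum; apply: eq_bigr => j _; rewrite hornerZ.
have hx0 : -1 <= (0 : R) <= 1 by apply/andP; split; lra.
have hK : forall (p : {poly R}) (M : R), (size p <= D)%N ->
    (forall x, -1 <= x <= 1 -> `|p.[x] - f x| <= M) ->
    forall K, \sum_(D <= k < K) a k ^+ 2 <= 2 * M ^+ 2.
  move=> p M hp hM K.
  have M0 : 0 <= M := le_trans (normr_ge0 _) (hM 0 hx0).
  case: (leqP D K) => hDK; last first.
    by rewrite big_geq ?mulr_ge0 ?sqr_ge0 // ltnW.
  pose q := p - p0.
  have hq : (size q <= D)%N.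
    by apply: leq_trans (size_polyD _ _) _; rewrite size_polyN geq_max hp hp0.
  have [d hd] := @spanc_poly R q D hq.
  have core : forall N, (K <= N)%N -> (D <= N)%N ->
      \sum_(D <= k < K) a k ^+ 2 <= 2 * (M + tau N) ^+ 2.
    move=> N hKN hDN.
    pose c j := if (j < D)%N then d j else - a j.
    have hc : forall t, \sum_(0 <= j < N) c j * cos (j%:R * t) =
        p.[cos t] - \sum_(0 <= j < N) 2 ^+ j / 2 * a j * (chebQ R j).[cos t].
      move=> t.
      rewrite !(big_cat_nat (leq0n D) hDN) /=.
      have e1 : \sum_(0 <= j < D) c j * cos (j%:R * t) =
          \sum_(0 <= j < D) d j * cos (j%:R * t).
        by apply: eq_big_nat => j /andP[_ hj]; rewrite /c hj.
      have e2 : \sum_(D <= j < N) c j * cos (j%:R * t) =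
          - \sum_(D <= j < N) 2 ^+ j / 2 * a j * (chebQ R j).[cos t].
        rewrite -sumrN; apply: eq_big_nat => j /andP[hj _].
        rewrite /c ltnNge hj /= u_cos ?mulNr //; lia.
      rewrite e1 e2 !big_mkord -hd /q hornerD hornerN hp0x.
      by rewrite opprD addrA.
    have hbd : forall t, `|\sum_(j < N) c j * cos (j%:R * t)| <= M + tau N.
      move=> t; have := hc t; rewrite !big_mkord => ->.
      have hx : -1 <= cos t <= 1 by rewrite -ler_norml cos_max.
      have h1 := hM _ hx.
      have h2 := hA _ N hx.
      have := ler_normD (p.[cos t] - f (cos t))
        (f (cos t) - \sum_(j < N) 2 ^+ j / 2 * a j * (chebQ R j).[cos t]).
      rewrite addrA subrK => h3.
      apply: le_trans h3 _; exact: lerD.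
    have := parseval R N c (M + tau N) hbd.
    move=> hpar; apply: le_trans hpar.
    rewrite -(big_mkord xpredT (fun j => c j ^+ 2)) (big_cat_nat (leq0n D) hDN) /=.
    rewrite (big_cat_nat hDK hKN) /=.
    have e3 : \sum_(D <= j < K) c j ^+ 2 = \sum_(D <= k < K) a k ^+ 2.
      by apply: eq_big_nat => j /andP[hj _]; rewrite /c ltnNge hj /= sqrrN.
    rewrite e3.
    have h5 : 0 <= \sum_(0 <= j < D) c j ^+ 2.
      by apply: sumr_ge0 => j _; exact: sqr_ge0.
    have h6 : 0 <= \sum_(K <= j < N) c j ^+ 2.
      by apply: sumr_ge0 => j _; exact: sqr_ge0.
    lra.
  apply/ler_addgt0Pr => e e0.
  pose del := Num.min 1 (e / (4 * M + 2)).
  have hM2 : 0 < 4 * M + 2 by lra.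
  have del0 : 0 < del.
    by rewrite /del lt_min ltr01 /= divr_gt0.
  have [N0 hN0] := tail_small _ ha _ del0.
  pose N := maxn N0 (maxn K D).
  have hcore := core N (ltac:(lia)) (ltac:(lia)).
  have htau : tau N <= del := hN0 N (ltac:(lia)).
  have tau0 : 0 <= tau N.
    apply: limr_ge; first exact: tail_cvg ha.
    by exists 0%N => // n _ /=; apply: sumr_ge0 => k _; exact: normr_ge0.
  have hd1 : del <= 1 by rewrite /del ge_min lexx.
  have hd2 : del * (4 * M + 2) <= e.
    have : del <= e / (4 * M + 2) by rewrite /del ge_min lexx orbT.
    by rewrite ler_pdivlMr.
  move: hcore htau tau0; move: (tau N) => T hcore htau tau0.
  have h1 : M * T <= M * del by apply: ler_wpM2l.
  have h2 : T * T <= T * 1 by apply: ler_wpM2l => //; lra.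
  have h3 : 2 * (M + T) ^+ 2 = 2 * M ^+ 2 + 4 * (M * T) + 2 * (T * T) by ring.
  lra.
split.
- apply/ereal_infP => y [p hp <-].
  set S := ereal_sup _.
  have ub : forall x, -1 <= x <= 1 -> ((`|p.[x] - f x|)%:E <= S)%E.
    by move=> x hx; apply: ereal_sup_ubound; exists x.
  move: ub; case: S => [r| |] ub.
  + rewrite lee_fin.
    have hr : forall x, -1 <= x <= 1 -> `|p.[x] - f x| <= r.
      by move=> x hx; rewrite -lee_fin; apply: ub.
    have r0 : 0 <= r := le_trans (normr_ge0 _) (hr 0 hx0).
    have hb : forall n, \sum_(D <= k < n) a k ^+ 2 / k%:R <= 2 * r ^+ 2.
      move=> n; apply: le_trans (hK p r hp hr n).
      apply: ler_sum_nat => k /andP[hk _].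
      rewrite -[X in _ <= X]mulr1 ler_wpM2l ?sqr_ge0 // invf_le1 ?ler1n ?ltr0n; lia.
    have hcvL : cvgn (fun n => \sum_(D <= k < n) a k ^+ 2 / k%:R).
      apply: nondecreasing_is_cvgn.
        move=> n m hnm; case: (leqP D n) => hDn.
          rewrite (big_cat_nat hDn hnm) /= lerDl.
          by apply: sumr_ge0 => k _; rewrite mulr_ge0 ?sqr_ge0 ?invr_ge0.
        by rewrite big_geq ?(ltnW hDn) //; apply: sumr_ge0 => k _; rewrite mulr_ge0 ?sqr_ge0 ?invr_ge0.
      by exists (2 * r ^+ 2) => _ [n _ <-]; exact: hb.
    have hL : limn (fun n => \sum_(D <= k < n) a k ^+ 2 / k%:R) <= 2 * r ^+ 2.
      by apply: limr_le => //; exists 0%N => // n _ /=; exact: hb.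
    apply: le_trans (ler_wsqrtr (_ : _ <= r ^+ 2)) _.
      by lra.
    by rewrite sqrtr_sqr ger0_norm.
  + by rewrite leey.
  + by move: (ub 0 hx0); rewrite leeNy_eq.
- apply: (@le_trans _ _ (ereal_sup [set (`|p0.[x] - f x|)%:E
                                | x in [set x : R | -1 <= x <= 1]])).
    by apply: ereal_inf_lbound; exists p0.
  apply/ereal_supP => y [x hx <-]; rewrite lee_fin.
  by rewrite hp0x distrC; exact: hA.
Qed.
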